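(* Grant (Lip-Conv), (Conv) and (Bern-ERM), let $\theta=1/(2A)$, and consider the event $$\Omega=\Big\{\forall f\in F\text{ with }\|f-f^*\|_{L_2}\le r_2(\theta):\ |(P-P_N)\mathcal L_f|\le\theta r_2^2(\theta)\Big\}.$$ On $\Omega$, any $\hat f^{ERM}\in\operatorname{argmin}_{f\in F}P_N\ell_f$ satisfies $\|\hat f^{ERM}-f^*\|_{L_2}\le r_2(\theta)$ and $P\mathcal L_{\hat f^{ERM}}\le\theta r_2^2(\theta)$.
   Context: Setting: $\bar{\mathcal Y}\subset\mathbb R$ convex, $F\subset L_2(\mu)$ a class of measurable functions $\mathcal X\to\bar{\mathcal Y}$, $\ell_f(x,y)=\bar\ell(f(x),y)$, $(X,Y)\sim P$, $X\sim\mu$, $Pg=\mathbb Eg(X,Y)$; $f^*$ is the unique minimizer of $f\mapsto P\ell_f$ over $F$, $\mathcal L_f=\ell_f-\ell_{f^*}$, $\|g\|_{L_2}=(\mathbb Eg(X)^2)^{1/2}$. Data $(X_i,Y_i)_{i=1}^N$, $P_Ng=\frac1N\sum_{i=1}^Ng(X_i,Y_i)$. (Lip-Conv): there is $L>0$ with $u\mapsto\bar\ell(u,y)$ convex and $L$-Lipschitz for every $y$. (Conv): $F$ convex. $r_2(\theta)$ is a given positive number (the complexity parameter, $r_2(\theta)\ge\inf\{r>0:32L\,w((F-f^* )\cap rB_{L_2})\le\theta r^2\sqrt N\}$, $w$ the Gaussian mean width). (Bern-ERM): there is $A>0$ such that every $f\in F$ with $\|f-f^*\|_{L_2}=r_2(1/(2A))$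 satisfies $\|f-f^*\|_{L_2}^2\le AP\mathcal L_f$. *)

(* Defs.v *)
From Stdlib Require Import Reals Lra.
Open Scope R_scope.

(* An abstract probability expectation on a sample space T: a set of
   integrable functions (a vector space containing constants) and a
   positive, normalised linear functional on it. *)
Record Expectation (T : Type) := {
  integrable : (T -> R) -> Prop;
  expect : (T -> R) -> R;
  int_const : forall c : R, integrable (fun _ => c);
  int_add : forall g h, integrable g -> integrable h -> integrable (fun z => g z + h z);
  int_scal : forall (a : R) g, integrable g -> integrable (fun z => a * g z);
  exp_add : forall g h, integrable g -> integrable h ->
      expect (fun z => g z + h z) = expect g + expect h;
  exp_scal : forall (a : R) g, integrable g -> expect (fun z => a * g z) = a * expect g;
  exp_mono : forall g h, integrable g -> integrable h ->
      (forall z, g z <= h z) -> expect g <= expect h;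
  exp_one : expect (fun _ => 1) = 1
}.
Arguments integrable {T} _ _.
Arguments expect {T} _ _.

(* P is the law of (X,Y) on X * R; the L2(mu) norm, mu the law of X. *)
Definition L2norm {X : Type} (P : Expectation (X * R)) (g : X -> R) : R :=
  sqrt (expect P (fun z => (g (fst z)) ^ 2)).

Definition lossf {X : Type} (lbar : R -> R -> R) (f : X -> R) : X * R -> R :=
  fun z => lbar (f (fst z)) (snd z).

Definition excess {X : Type} (lbar : R -> R -> R) (fstar f : X -> R) : X * R -> R :=
  fun z => lossf lbar f z - lossf lbar fstar z.

(* empirical mean P_N g = (1/N) sum_{i=1}^N g(X_i,Y_i), data indexed 0..N-1 *)
Definition PN {X : Type} (N : nat) (data : nat -> X * R) (g : X * R -> R) : R :=
  / INR N * sum_f_R0 (fun i => g (data i)) (Nat.pred N).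

Definition convex_set (Ybar : R -> Prop) : Prop :=
  forall u v t, Ybar u -> Ybar v -> 0 <= t <= 1 -> Ybar (t * u + (1 - t) * v).

Definition convex_class {X : Type} (F : (X -> R) -> Prop) : Prop :=
  forall f g t, F f -> F g -> 0 <= t <= 1 -> F (fun x => t * f x + (1 - t) * g x).

(* Main.v *)
Require Import Defs.
From Stdlib Require Import Reals Lra Lia FunctionalExtensionality.
Open Scope R_scope.

Lemma PN_mono {X : Type} N data (g h : X * R -> R) :
  (forall z, g z <= h z) -> PN N data g <= PN N data h.
Proof.
  intro H. unfold PN. apply Rmult_le_compat_l.
  - destruct N. simpl; rewrite Rinv_0; lra.
    left; apply Rinv_0_lt_compat, lt_0_INR; lia.
  - apply sum_Rle; intros; apply H.
Qed.

Lemma PN_scal {X : Type} N data (t : R) (g : X * R -> R) :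
  PN N data (fun z => t * g z) = t * PN N data g.
Proof.
  unfold PN.
  replace (fun i => t * g (data i)) with (fun i => g (data i) * t).
  - rewrite <- scal_sum. ring.
  - apply functional_extensionality; intro; ring.
Qed.

Lemma exp_nonneg {T} (P : Expectation T) g : integrable P g -> (forall z, 0 <= g z) -> 0 <= expect P g.
Proof.
  intros Hi H.
  assert (E0 : expect P (fun _ => 0) = 0).
  { replace (fun _ : T => 0) with (fun _ : T => 0 * 1).
    rewrite exp_scal by apply int_const. ring.
    apply functional_extensionality; intro; ring. }
  rewrite <- E0. apply exp_mono; auto. apply int_const.
Qed.

Theorem proposition3
  (X : Type) (P : Expectation (X * R))
  (Ybar : R -> Prop) (HYbar : convex_set Ybar)
  (F : (X -> R) -> Prop)
  (HFrange : forall f, F f -> forall x, Ybar (f x))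
  (HFL2 : forall f, F f -> integrable P (fun z => (f (fst z)) ^ 2))
  (lbar : R -> R -> R)
  (Hloss_int : forall f, F f -> integrable P (lossf lbar f))
  (fstar : X -> R) (Hfstar : F fstar)
  (Hmin : forall f, F f -> expect P (lossf lbar fstar) <= expect P (lossf lbar f))
  (Huniq : forall f, F f -> expect P (lossf lbar f) = expect P (lossf lbar fstar) ->
                      L2norm P (fun x => f x - fstar x) = 0)
  (* (Lip-Conv) *)
  (L : R) (HL : 0 < L)
  (Hconv : forall y u v t, Ybar u -> Ybar v -> 0 <= t <= 1 ->
      lbar (t * u + (1 - t) * v) y <= t * lbar u y + (1 - t) * lbar v y)
  (Hlip : forall y u v, Ybar u -> Ybar v -> Rabs (lbar u y - lbar v y) <= L * Rabs (u - v))
  (* (Conv) *)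
  (HFconv : convex_class F)
  (* complexity parameter theta |-> r_2(theta) (positive) *)
  (r2 : R -> R) (Hr2 : forall theta, 0 < theta -> 0 < r2 theta)
  (* (Bern-ERM) *)
  (A : R) (HA : 0 < A)
  (HBern : forall f, F f -> L2norm P (fun x => f x - fstar x) = r2 (/ (2 * A)) ->
      (L2norm P (fun x => f x - fstar x)) ^ 2 <= A * expect P (excess lbar fstar f))
  (* data *)
  (N : nat) (HN : (0 < N)%nat) (data : nat -> X * R)
  (* the event Omega, with theta = 1/(2A) *)
  (HOmega : forall f, F f -> L2norm P (fun x => f x - fstar x) <= r2 (/ (2 * A)) ->
      Rabs (expect P (excess lbar fstar f) - PN N data (excess lbar fstar f))
        <= / (2 * A) * (r2 (/ (2 * A))) ^ 2)
  (* an empirical risk minimiser *)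
  (fhat : X -> R) (Hfhat : F fhat)
  (Herm : forall f, F f -> PN N data (lossf lbar fhat) <= PN N data (lossf lbar f)) :
  L2norm P (fun x => fhat x - fstar x) <= r2 (/ (2 * A)) /\
  expect P (excess lbar fstar fhat) <= / (2 * A) * (r2 (/ (2 * A))) ^ 2.
Proof.
  set (rr := r2 (/ (2 * A))).
  set (th := / (2 * A)).
  assert (Hth : 0 < th) by (unfold th; apply Rinv_0_lt_compat; lra).
  assert (Hr : 0 < rr) by (apply Hr2; exact Hth).
  assert (HthA : A * th = / 2) by (unfold th; field; lra).
  assert (HPNhat : PN N data (excess lbar fstar fhat) <= 0).
  { unfold excess.
    assert (H := Herm fstar Hfstar).
    replace (PN N data (fun z => lossf lbar fhat z - lossf lbar fstar z))
      with (PN N data (lossf lbar fhat) + (-1) * PN N data (lossf lbar fstar)).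
    lra.
    unfold PN. rewrite <- Rmult_assoc. rewrite (Rmult_comm (-1)). rewrite Rmult_assoc.
    rewrite <- Rmult_plus_distr_l. f_equal. rewrite scal_sum.
    rewrite <- plus_sum. apply sum_eq; intros; ring. }
  set (g := fun x => fhat x - fstar x).
  set (m := fun x => / 2 * fhat x + (1 - / 2) * fstar x).
  assert (Hm : F m) by (apply HFconv; auto; lra).
  assert (Hgint : integrable P (fun z => g (fst z) ^ 2)).
  { replace (fun z : X * R => g (fst z) ^ 2) with
      (fun z : X * R => (2 * fhat (fst z) ^ 2 + 2 * fstar (fst z) ^ 2) + (-4) * m (fst z) ^ 2).
    - apply int_add; [apply int_add|]; apply int_scal; auto.
    - apply functional_extensionality; intro z; unfold g, m; cbv beta; field. }
  assert (Hgnn : 0 <= expect P (fun z => g (fst z) ^ 2)).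
  { apply exp_nonneg; auto. intro; apply pow2_ge_0. }
  assert (Part1 : L2norm P g <= rr).
  { destruct (Rle_or_lt (L2norm P g) rr) as [|Hlt]; auto. exfalso.
    set (n := L2norm P g) in Hlt.
    set (t := rr / n).
    assert (Hn : 0 < n) by lra.
    assert (Ht : 0 < t < 1).
    { unfold t; split. apply Rdiv_lt_0_compat; lra.
      apply (Rmult_lt_reg_r n); auto. unfold Rdiv; rewrite Rmult_assoc, Rinv_l; lra. }
    set (f := fun x => t * fhat x + (1 - t) * fstar x).
    assert (Hf : F f) by (apply HFconv; auto; lra).
    assert (Hnormf : L2norm P (fun x => f x - fstar x) = rr).
    { unfold L2norm.
      replace (fun z : X * R => (f (fst z) - fstar (fst z)) ^ 2) with
        (fun z : X * R => t ^ 2 * g (fst z) ^ 2).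
      2:{ apply functional_extensionality; intro; unfold f, g; cbv beta; ring. }
      rewrite exp_scal by auto. rewrite sqrt_mult_alt by (apply pow2_ge_0).
      rewrite sqrt_pow2 by lra. change (t * n = rr). unfold t; field; lra. }
    assert (HPNf : PN N data (excess lbar fstar f) <= 0).
    { apply Rle_trans with (PN N data (fun z => t * excess lbar fstar fhat z)).
      - apply PN_mono. intro z. unfold excess, lossf, f.
        assert (Hc := Hconv (snd z) (fhat (fst z)) (fstar (fst z)) t
                   (HFrange _ Hfhat _) (HFrange _ Hfstar _) ltac:(lra)).
        lra.
      - rewrite PN_scal. assert (0 <= t) by lra.
        assert (t * PN N data (excess lbar fstar fhat) <= t * 0)
          by (apply Rmult_le_compat_l; auto). lra. }
    assert (HO := HOmega f Hf ltac:(rewrite Hnormf; apply Req_le; reflexivity)).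
    change (/ (2 * A) * r2 (/ (2 * A)) ^ 2) with (th * rr ^ 2) in HO.
    pose proof (Rle_abs (expect P (excess lbar fstar f) - PN N data (excess lbar fstar f))) as HO1.
    assert (HB := HBern f Hf Hnormf). rewrite Hnormf in HB.
    assert (HE : expect P (excess lbar fstar f) <= th * rr ^ 2) by lra.
    assert (A * expect P (excess lbar fstar f) <= A * (th * rr ^ 2))
      by (apply Rmult_le_compat_l; lra).
    assert (A * (th * rr ^ 2) = / 2 * rr ^ 2) by (rewrite <- Rmult_assoc, HthA; ring).
    assert (0 < rr ^ 2) by (apply pow_lt; lra).
    lra. }
  split; [exact Part1|].
  assert (HO := HOmega fhat Hfhat Part1). change (/ (2 * A) * r2 (/ (2 * A)) ^ 2) with (th * rr ^ 2) in HO.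
  pose proof (Rle_abs (expect P (excess lbar fstar fhat) - PN N data (excess lbar fstar fhat))). lra.
Qed.
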